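(* Let $(\mathcal A,n)$ be a dynamic network congestion game. An infinite path $\rho$ from $c_{\mathsf{src}}$ in the configuration graph is the outcome of a Nash equilibrium if, and only if, for every player $i\in[n]$, every index $1\le l<|\rho|$, and every configuration $c\in\mathrm{dev}_i(\rho(l),\rho(l+1))$, \[\mathrm{cost}_i(\rho_{\ge l})\le \mathrm{val}_{i,c}+\mathrm{cost}_i(\rho(l),c).\]
   Context: An arena is $\mathcal A=(V,E,\mathsf{src},\mathsf{tgt})$ with $V$ finite and $E$ a partial function from $V\times V$ to non-decreasing piecewise-affine functions $\mathbb N\to\mathbb N$ (edge $e$ has cost function $\ell_e$); $\mathsf{tgt}$ has only a self-loop of constant cost $0$ and is reachable from every state. In the dynamic NCG $(\mathcal A,n)$ with players $[n]=\{1,\dots,n\}$, configurations are maps $c:[n]\to V$; $c_{\mathsf{src}}$ maps everyone to $\mathsf{src}$. From $c$, a move vector $(e_i)_i$ with $e_i$ an edge leaving $c(i)$ leads to $c'$ with $c'(i)$ the target of $e_i$; player $i$ pays $w(i)=\ell_{e_i}(u_i)$, $u_i$ being the number of $j$ with $e_j=e_i$. This is a transition $c\Rightarrow c'$ with weight vector $w$; write $\mathrm{cost}_i(c,c')=w(i)$. A path is a sequence of consecutive transitions; $\rho(l)$ is its $l$-th configuration, $\rho_{\ge l}$ its suffix from the $l$-th configuration, and $\mathrm{cost}_i$ of a path is player $i$'s total payment along it ($+\infty$ for an infinite path along which player $i$ never reaches $\mathsf{tgt}$). Strategies map finite histories to edges leaving the player's current state; a profile has a unique outcome; $\mathrm{cost}_i(\sigma)$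 is the cost of the outcome; a Nash equilibrium is a profile where no player can lower their cost by a unilateral change of strategy. Define $\mathrm{dev}_i(c,c')=\{c''\mid c\Rightarrow c'' \text{ and } c''(j)=c'(j)\ \forall j\neq i\}$. The value of configuration $c$ for player $i$ is $\mathrm{val}_{i,c}=\sup_{\sigma_{-i}}\inf_{\sigma_i}\mathrm{cost}_i((\sigma_{-i},\sigma_i),c)$, where the game is started from configuration $c$, $\sigma_{-i}$ ranges over strategies of the other players and $\sigma_i$ over strategies of player $i$. *)

(* Defs.v *)
From HB Require Import structures.
From mathcomp Require Import all_boot all_order all_algebra.
From mathcomp Require Import all_classical all_reals all_analysis.
Set Implicit Arguments. Unset Strict Implicit. Unset Printing Implicit Defensive.
Import Order.TTheory GRing.Theory Num.Theory.
Local Open Scope classical_set_scope.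
Local Open Scope ring_scope.

Definition nondecreasing_nat (f : nat -> nat) : Prop :=
  forall x y : nat, (x <= y)%N -> (f x <= f y)%N.

Definition affine_on (f : nat -> nat) (lo : nat) (hi : option nat) : Prop :=
  exists a b : int, forall x : nat, (lo <= x)%N ->
    (if hi is Some h then (x < h)%N else true) ->
    ((f x)%:Z = a * x%:Z + b)%R.

Definition piecewise_affine (f : nat -> nat) : Prop :=
  exists s : seq nat,
    [/\ sorted ltn (0%N :: s),
        (forall k, (k < size s)%N ->
           affine_on f (nth 0%N (0%N :: s) k) (Some (nth 0%N (0%N :: s) k.+1)))
      & affine_on f (last 0%N s) None].

(* E : partial function V x V -> cost functions; an edge is a pair (u,v)
   with E u v = Some l_(u,v). *)
Record arena (V : finType) := Arena {
  edge : V -> V -> option (nat -> nat);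
  src : V;
  tgt : V }.

Definition edge_rel (V : finType) (A : arena V) : rel V :=
  fun u v => isSome (edge A u v).

Definition arena_wf (V : finType) (A : arena V) : Prop :=
  [/\ (forall u v f, edge A u v = Some f -> nondecreasing_nat f /\ piecewise_affine f),
      (forall v f, edge A (tgt A) v = Some f -> v = tgt A),
      (exists2 f, edge A (tgt A) (tgt A) = Some f & forall x, f x = 0%N)
    & (forall v, connect (edge_rel A) v (tgt A))].

Definition config (V : finType) (n : nat) := {ffun 'I_n -> V}.

Definition csrc (V : finType) (A : arena V) (n : nat) : config V n :=
  [ffun _ => src A].

Definition trans (V : finType) (A : arena V) (n : nat) (c c' : config V n) : Prop :=
  forall i : 'I_n, edge A (c i) (c' i) <> None.

Definition load (V : finType) (n : nat) (c c' : config V n) (i : 'I_n) : nat :=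
  #|[set j : 'I_n | (c j == c i) && (c' j == c' i)]|.

Definition step_cost (V : finType) (A : arena V) (n : nat)
    (c c' : config V n) (i : 'I_n) : nat :=
  match edge A (c i) (c' i) with
  | Some f => f (load c c' i)
  | None => 0%N
  end.

Definition dev (V : finType) (A : arena V) (n : nat) (i : 'I_n)
    (c c' : config V n) : set (config V n) :=
  [set c'' | trans A c c'' /\ (forall j : 'I_n, j != i -> c'' j = c' j)].

Definition is_path (V : finType) (A : arena V) (n : nat) (rho : nat -> config V n) : Prop :=
  forall k, trans A (rho k) (rho k.+1).

Definition path_suffix (T : Type) (rho : nat -> T) (l : nat) : nat -> T :=
  fun k => rho (l + k)%N.

Definition path_cost (R : realType) (V : finType) (A : arena V) (n : nat)
    (i : 'I_n) (rho : nat -> config V n) : \bar R :=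
  if `[< exists k, rho k i = tgt A >] then
    (\sum_(0 <= k <oo) ((step_cost A (rho k) (rho k.+1) i)%:R)%:E)%E
  else +oo%E.

(* a history is a nonempty finite sequence of configurations, represented as
   (first configuration c0, remaining configurations h); the current
   configuration is last c0 h.  A strategy chooses the target of an edge. *)
Definition strat (V : finType) (n : nat) := config V n -> seq (config V n) -> V.

Definition valid_strat (V : finType) (A : arena V) (n : nat) (i : 'I_n)
    (s : strat V n) : Prop :=
  forall (c0 : config V n) (h : seq (config V n)), edge_rel A ((last c0 h) i) (s c0 h).

Definition profile (V : finType) (n : nat) := 'I_n -> strat V n.

Definition valid_profile (V : finType) (A : arena V) (n : nat) (sg : profile V n) : Prop :=
  forall i, valid_strat A i (sg i).

Fixpoint hist (V : finType) (n : nat) (sg : profile V n) (c0 : config V n) (k : nat)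
    : seq (config V n) :=
  match k with
  | 0 => [::]
  | k'.+1 => let h := hist sg c0 k' in rcons h [ffun i => sg i c0 h]
  end.

Definition outcome (V : finType) (n : nat) (sg : profile V n) (c0 : config V n)
    : nat -> config V n :=
  fun k => last c0 (hist sg c0 k).

Definition profile_cost (R : realType) (V : finType) (A : arena V) (n : nat)
    (sg : profile V n) (c0 : config V n) (i : 'I_n) : \bar R :=
  path_cost R A i (outcome sg c0).

Definition update (V : finType) (n : nat) (sg : profile V n) (i : 'I_n)
    (s : strat V n) : profile V n :=
  fun j => if j == i then s else sg j.

Definition is_NE (R : realType) (V : finType) (A : arena V) (n : nat)
    (sg : profile V n) : Prop :=
  valid_profile A sg /\
  forall (i : 'I_n) (s : strat V n), valid_strat A i s ->
    (profile_cost R A sg (csrc A n) i <= profile_cost R A (update sg i s) (csrc A n) i)%E.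

(* val_{i,c} = sup_{sigma_-i} inf_{sigma_i} cost_i((sigma_-i, sigma_i), c);
   sigma_-i is represented by a full profile whose i-th component is overwritten *)
Definition game_val (R : realType) (V : finType) (A : arena V) (n : nat)
    (i : 'I_n) (c : config V n) : \bar R :=
  ereal_sup [set x | exists2 sg : profile V n, valid_profile A sg &
     x = ereal_inf [set y | exists2 s : strat V n, valid_strat A i s &
                                y = profile_cost R A (update sg i s) c i]].

Arguments path_cost R {V} A {n} i rho.
Arguments profile_cost R {V} A {n} sg c0 i.
Arguments is_NE R {V} A {n} sg.
Arguments game_val R {V} A {n} i c.

(* Main.v *)
Require Import Defs.
From HB Require Import structures.
From mathcomp Require Import all_boot all_order all_algebra.
From mathcomp Require Import all_classical all_reals all_analysis.
Set Implicit Arguments. Unset Strict Implicit. Unset Printing Implicit Defensive.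
Import Order.TTheory GRing.Theory Num.Theory.
Local Open Scope classical_set_scope.
Local Open Scope ring_scope.

Section Game.
Variables (R : realType) (V : finType) (A : arena V) (n : nat).
Hypothesis hA : arena_wf A.
Local Notation T := (config V n).

Definition sc (rho : nat -> T) (i : 'I_n) (j : nat) : nat :=
  step_cost A (rho j) (rho j.+1) i.

Lemma tgt_stay (rho : nat -> T) i k : is_path A rho -> rho k i = tgt A ->
  forall m, rho (k + m)%N i = tgt A.
Proof.
move=> hp hk; elim=> [|m IH]; first by rewrite addn0.
have := hp (k + m)%N i; rewrite addnS.
case E: (edge A (rho (k + m)%N i) (rho (k + m).+1 i)) => [f|] // _.
case: hA => _ h2 _ _; apply: (h2 _ f); by rewrite -IH.
Qed.

Lemma sc_tgt rho i j : is_path A rho -> rho j i = tgt A -> sc rho i j = 0%N.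
Proof.
move=> hp hj; have := tgt_stay hp hj 1; rewrite addn1 => hj1.
rewrite /sc /step_cost hj hj1; case: hA => _ _ [f -> f0] _; exact: f0.
Qed.

Lemma pc_fin rho i k : is_path A rho -> rho k i = tgt A ->
  path_cost R A i rho = ((\sum_(j < k) sc rho i j)%:R)%:E.
Proof.
move=> hp hk; rewrite /path_cost asboolT; last by exists k.
rewrite (@nneseries_split R _ 0 k); last by move=> j _; rewrite lee_fin ler0n.
rewrite add0n [X in (_ + X)%E](@eseries0 R _ k xpredT); last first.
  move=> j kj _; rewrite -(subnKC kj).
  by have := sc_tgt hp (tgt_stay hp hk (j - k)); rewrite /sc => ->.
by rewrite adde0 big_mkord sumEFin natr_sum.
Qed.

Lemma pc_split rho i m : is_path A rho ->
  path_cost R A i rho = (((\sum_(j < m) sc rho i j)%:R)%:E + path_cost R A i (path_suffix rho m))%E.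
Proof.
move=> hp.
have hps : is_path A (path_suffix rho m).
  by move=> k; rewrite /path_suffix addnS; exact: hp.
case: (pselect (exists k, rho k i = tgt A)) => [[k hk]|hn].
  have hmk : rho (m + k)%N i = tgt A by rewrite addnC; exact: tgt_stay.
  rewrite (pc_fin hp hmk) (@pc_fin _ _ k hps) //.
  rewrite big_split_ord natrD EFinD; congr (_ + ((_ %:R)%:E))%E.
  by apply: eq_bigr => j _; rewrite /sc /path_suffix /= addnS.
have hn' : ~ exists k, path_suffix rho m k i = tgt A.
  by move=> [k hk]; apply: hn; exists (m + k)%N.
by rewrite /path_cost !asboolF.
Qed.


Lemma pc_form (rho : nat -> T) i : is_path A rho ->
  (exists m : nat, path_cost R A i rho = (m%:R)%:E) \/ path_cost R A i rho = +oo%E.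
Proof.
move=> hp; case: (pselect (exists k, rho k i = tgt A)) => [[k hk]|hn].
  by left; exists (\sum_(j < k) sc rho i j)%N; exact: pc_fin hk.
by right; rewrite /path_cost asboolF.
Qed.

Lemma outcomeS (sg : profile V n) c0 k :
  outcome sg c0 k.+1 = [ffun j => sg j c0 (hist sg c0 k)].
Proof. by rewrite /outcome /= last_rcons. Qed.

Lemma histS (sg : profile V n) c0 k :
  hist sg c0 k.+1 = rcons (hist sg c0 k) (outcome sg c0 k.+1).
Proof. by rewrite outcomeS. Qed.

Lemma size_hist (sg : profile V n) c0 k : size (hist sg c0 k) = k.
Proof. by elim: k => //= k IH; rewrite size_rcons IH. Qed.

Lemma hist_map (sg : profile V n) c0 k :
  hist sg c0 k = [seq outcome sg c0 m.+1 | m <- iota 0 k].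
Proof.
elim: k => // k IH; rewrite histS IH -cats1 -addn1 iotaD map_cat /=.
by rewrite add0n addn1.
Qed.

Lemma outcome_path (sg : profile V n) c0 : valid_profile A sg -> is_path A (outcome sg c0).
Proof.
move=> hv k i; rewrite outcomeS ffunE; have := hv i c0 (hist sg c0 k).
by rewrite /edge_rel /outcome; case: edge.
Qed.

Lemma valid_update (sg : profile V n) i s :
  valid_profile A sg -> valid_strat A i s -> valid_profile A (update sg i s).
Proof. by move=> hv hs j; rewrite /update; case: eqP => [->|]. Qed.

Lemma hist_split (sg tp : profile V n) c0 l c :
  hist sg c0 l.+1 = rcons (hist sg c0 l) c ->
  (forall j h, sg j c0 (hist sg c0 l ++ c :: h) = tp j c h) ->
  forall m, hist sg c0 (l.+1 + m) = hist sg c0 l ++ c :: hist tp c m.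
Proof.
move=> h1 h2; elim=> [|m IH]; first by rewrite addn0 h1 cats1.
rewrite addnS histS outcomeS IH rcons_cat rcons_cons /=; congr (_ ++ _ :: rcons _ _).
by apply/ffunP => j; rewrite !ffunE h2.
Qed.

Lemma outcome_split (sg tp : profile V n) c0 l c :
  hist sg c0 l.+1 = rcons (hist sg c0 l) c ->
  (forall j h, sg j c0 (hist sg c0 l ++ c :: h) = tp j c h) ->
  path_suffix (outcome sg c0) l.+1 = outcome tp c.
Proof.
move=> h1 h2; apply: funext => m; rewrite /path_suffix /outcome.
by rewrite (hist_split h1 h2) last_cat.
Qed.

Lemma cost_dev (rho rho' : nat -> T) i l c : is_path A rho' ->
  (forall m, (m <= l)%N -> rho' m = rho m) -> rho' l.+1 = c ->
  path_cost R A i rho' = (((\sum_(j < l) sc rho i j)%:R)%:E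
     + ((step_cost A (rho l) c i)%:R)%:E + path_cost R A i (path_suffix rho' l.+1))%E.
Proof.
move=> hp heq hc; rewrite (pc_split _ l.+1 hp) big_ord_recr /= natrD EFinD.
congr (_ + ((_%:R)%:E) + _)%E; last by rewrite /sc heq // hc.
congr ((_%:R)%:E); apply: eq_bigr => j _.
by rewrite /sc !heq // ltnW.
Qed.

Lemma inf_att (S : set (\bar R)) : S !=set0 ->
  (forall x, S x -> (exists m : nat, x = (m%:R)%:E) \/ x = +oo%E) -> S (ereal_inf S).
Proof.
move=> [x0 Sx0] hf.
case: (pselect (exists m : nat, S (m%:R)%:E)) => [hex|hno].
  have hex' : exists m, `[< S (m%:R)%:E >] by case: hex => m hm; exists m; exact/asboolP.
  case: (ex_minnP hex') => m /asboolP Sm hmin.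
  suff -> : ereal_inf S = (m%:R)%:E by [].
  apply/eqP; rewrite eq_le ereal_inf_lbound //=; apply: le_ereal_inf_tmp => y Sy.
  case: (hf y Sy) => [[k hk]|->]; last exact: leey.
  rewrite hk in Sy *.
  by rewrite lee_fin ler_nat; apply: hmin; exact/asboolP.
have hoo : forall y, S y -> y = +oo%E.
  by move=> y Sy; case: (hf y Sy) => [[k hk]|//]; exfalso; apply: hno; exists k; rewrite -hk.
suff -> : ereal_inf S = +oo%E by rewrite -(hoo _ Sx0).
apply/eqP; rewrite eq_le leey /=; apply: le_ereal_inf_tmp => y Sy.
by rewrite (hoo _ Sy).
Qed.

Lemma sup_att (S : set (\bar R)) (B : nat) : S !=set0 ->
  (forall x, S x -> exists m : nat, x = (m%:R)%:E /\ (m <= B)%N) -> S (ereal_sup S).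
Proof.
move=> [x0 Sx0] hf.
have hex' : exists m, `[< S (m%:R)%:E >].
  by case: (hf _ Sx0) => m [hm _]; exists m; apply/asboolP; rewrite -hm.
have hb : forall m, `[< S (m%:R)%:E >] -> (m <= B)%N.
  move=> m /asboolP Sm; case: (hf _ Sm) => k [hk kB].
  move/eqP: hk; rewrite eqe => /eqP /(congr1 (fun x : R => x)) hk.
  by move: hk => /eqP; rewrite eqr_nat => /eqP ->.
case: (ex_maxnP hex' hb) => m /asboolP Sm hmax.
suff -> : ereal_sup S = (m%:R)%:E by [].
apply/eqP; rewrite eq_le ereal_sup_ubound // andbT; apply: ge_ereal_sup => y Sy.
case: (hf y Sy) => k [hk _]; rewrite hk in Sy *; rewrite lee_fin ler_nat; apply: hmax; exact/asboolP.
Qed.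


Definition dpred (v : V) (m : nat) : bool :=
  `[< exists p : seq V, [/\ size p = m, path (edge_rel A) v p & last v p = tgt A] >].

Lemma dpred_ex v : exists m, dpred v m.
Proof.
case: hA => _ _ _ /(_ v) /connectP [p hp hl].
by exists (size p); apply/asboolP; exists p; split.
Qed.

Definition dist v := ex_minn (dpred_ex v).

Lemma dist_tgt : dist (tgt A) = 0%N.
Proof.
rewrite /dist; case: ex_minnP => m _ h; apply/eqP; rewrite -leqn0; apply: h.
by apply/asboolP; exists [::].
Qed.

Lemma dist_le v p : path (edge_rel A) v p -> last v p = tgt A -> (dist v <= size p)%N.
Proof.
move=> hp hl; rewrite /dist; case: ex_minnP => m _ h; apply: h.
by apply/asboolP; exists p.
Qed.

Lemma dist_dec v : v != tgt A -> exists w, edge_rel A v w && (dist w < dist v)%N.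
Proof.
move=> hv; rewrite {2}/dist; case: ex_minnP => m /asboolP [p [sz pth lst]] _.
case: p sz pth lst => [|w p] sz pth lst; first by rewrite -lst eqxx in hv.
move: pth => /= /andP [e pth]; exists w; rewrite e /= -sz /=.
by rewrite ltnS; apply: dist_le.
Qed.

Definition next (v : V) : V :=
  if [pick w | edge_rel A v w && (dist w < dist v)%N] is Some w then w else tgt A.

Lemma next_edge v : edge_rel A v (next v).
Proof.
rewrite /next; case: pickP => [w /andP [] //|hn].
have [->|hv] := eqVneq v (tgt A).
  by case: hA => _ _ [f hf _] _; rewrite /edge_rel hf.
by case: (dist_dec hv) => w hw; rewrite hn in hw.
Qed.

Lemma next_dist v : v != tgt A -> (dist (next v) < dist v)%N.
Proof.
move=> hv; rewrite /next; case: pickP => [w /andP [] //|hn].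
by case: (dist_dec hv) => w hw; rewrite hn in hw.
Qed.

Lemma next_tgt : next (tgt A) = tgt A.
Proof. by rewrite /next; case: pickP => [w /andP []|//]; rewrite dist_tgt ltn0. Qed.

Lemma iter_next m v : (dist v <= m)%N -> iter m next v = tgt A.
Proof.
elim: m v => [|m IH] v hd.
  have [//|hv] := eqVneq v (tgt A).
  by have := next_dist hv; rewrite leqn0 in hd; rewrite (eqP hd) ltn0.
rewrite iterSr; have [->|hv] := eqVneq v (tgt A).
  by rewrite next_tgt; apply: IH; rewrite dist_tgt.
by apply: IH; rewrite -ltnS; apply: leq_trans (next_dist hv) hd.
Qed.

Definition walk (i : 'I_n) : strat V n := fun c0 h => next (last c0 h i).

Lemma walk_valid i : valid_strat A i (walk i).
Proof. by move=> c0 h; exact: next_edge. Qed.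

Lemma walk_profile_valid : valid_profile A (fun j => walk j).
Proof. by move=> j; exact: walk_valid. Qed.

Lemma walk_pos (sg : profile V n) i c0 k :
  (outcome (update sg i (walk i)) c0 k) i = iter k next (c0 i).
Proof.
elim: k => [|k IH] //; rewrite outcomeS ffunE /update eqxx /walk iterS -IH //.
Qed.

Definition Mb : nat :=
  (\max_(u : V) \max_(v : V) (if edge A u v is Some f then f n else 0))%N.

Lemma sc_le (c c' : T) i : (step_cost A c c' i <= Mb)%N.
Proof.
rewrite /step_cost; case E: (edge A (c i) (c' i)) => [f|] //.
case: hA => h1 _ _ _; have [hm _] := h1 _ _ _ E.
apply: (@leq_trans (f n)); first apply: hm.
  by rewrite /load; apply: leq_trans (max_card _) _; rewrite card_ord.
apply: leq_trans (leq_bigmax (c i)).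
by apply: leq_trans (leq_bigmax (c' i)); rewrite E.
Qed.

Lemma walk_cost (sg : profile V n) i c : valid_profile A sg ->
  (profile_cost R A (update sg i (walk i)) c i <= (((dist (c i) * Mb)%N)%:R)%:E)%E.
Proof.
move=> hv; have hp := outcome_path (c0:=c) (valid_update hv (walk_valid i)).
have ht : outcome (update sg i (walk i)) c (dist (c i)) i = tgt A.
  by rewrite walk_pos iter_next.
rewrite /profile_cost (pc_fin hp ht) lee_fin ler_nat.
apply: (@leq_trans (\sum_(j < dist (c i)) Mb)%N); first by apply: leq_sum => j _; exact: sc_le.
by rewrite sum_nat_const card_ord.
Qed.

Definition infset (P : profile V n) i (c : T) : set (\bar R) :=
  [set y | exists2 s : strat V n, valid_strat A i s &
                                y = profile_cost R A (update P i s) c i].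

Lemma inf_mem (P : profile V n) i c : valid_profile A P ->
  infset P i c (ereal_inf (infset P i c)).
Proof.
move=> hv; apply: inf_att.
  by exists (profile_cost R A (update P i (walk i)) c i); exists (walk i) => //; exact: walk_valid.
move=> x [s hs ->]; apply: pc_form; apply: outcome_path; exact: valid_update.
Qed.

Lemma inf_bound (P : profile V n) i c : valid_profile A P ->
  exists m : nat, ereal_inf (infset P i c) = (m%:R)%:E /\ (m <= dist (c i) * Mb)%N.
Proof.
move=> hv; have hle : (ereal_inf (infset P i c) <= (((dist (c i) * Mb)%N)%:R)%:E)%E.
  apply: le_trans (walk_cost i c hv); apply: ereal_inf_lbound.
  by exists (walk i) => //; exact: walk_valid.
have [s hs hsE] := inf_mem i c hv.
have := pc_form i (outcome_path (c0:=c) (valid_update hv hs)).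
rewrite /profile_cost in hsE; rewrite -hsE => -[[m hm]|hoo]; last by rewrite hoo leye_eq in hle.
by exists m; split => //; move: hle; rewrite hm lee_fin ler_nat.
Qed.

Lemma punish i (c : T) : exists P : profile V n, valid_profile A P /\
  forall s, valid_strat A i s -> (game_val R A i c <= profile_cost R A (update P i s) c i)%E.
Proof.
have : [set x | exists2 sg : profile V n, valid_profile A sg &
     x = ereal_inf (infset sg i c)] (game_val R A i c).
  apply: (@sup_att _ (dist (c i) * Mb)).
    by exists (ereal_inf (infset (fun j => walk j) i c)); exists (fun j => walk j) => //; exact: walk_profile_valid.
  move=> x [sg hsg ->]; exact: inf_bound.
move=> [P hP hPE]; exists P; split => // s hs; rewrite hPE; apply: ereal_inf_lbound.
by exists s.
Qed.

Lemma best_resp (P : profile V n) i (c : T) : valid_profile A P ->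
  exists s, valid_strat A i s /\ (profile_cost R A (update P i s) c i <= game_val R A i c)%E.
Proof.
move=> hv; have [s hs hsE] := inf_mem i c hv; exists s; split => //.
rewrite -hsE; apply: ereal_sup_ubound; by exists P.
Qed.


Lemma dir1 (rho : nat -> T) (sg : profile V n) :
  is_NE R A sg -> (forall k, outcome sg (csrc A n) k = rho k) ->
  forall i l (c : T), dev A i (rho l) (rho l.+1) c ->
  (path_cost R A i (path_suffix rho l) <=
     game_val R A i c + ((step_cost A (rho l) c i)%:R)%:E)%E.
Proof.
move=> [hv hne] hout i l c [htr hoth].
set c0 := csrc A n.
set H := hist sg c0 l.
pose Q : profile V n := fun j c0' h' => sg j c0 (H ++ c0' :: h').
have hQ : valid_profile A Q.
  by move=> j c0' h'; have := hv j c0 (H ++ c0' :: h'); rewrite last_cat.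
have [s [hs hcost]] := best_resp i c hQ.
pose cand (c1 : T) (h : seq T) : V :=
  if (size h < l)%N then sg i c1 h else if size h == l then c i
  else s (nth c1 h l) (drop l.+1 h).
pose s' : strat V n := fun c1 h =>
  if edge_rel A (last c1 h i) (cand c1 h) then cand c1 h else sg i c1 h.
have hs' : valid_strat A i s'.
  by move=> c1 h; rewrite /s'; case: ifP => // _; exact: hv.
pose sg' := update sg i s'.
have hpre : forall k, (k <= l)%N -> hist sg' c0 k = hist sg c0 k.
  elim=> [//|k IH] hk; rewrite [LHS]histS [RHS]histS !outcomeS IH; last exact: ltnW.
  congr rcons; apply/ffunP => j; rewrite !ffunE /sg' /update.
  case: eqP => [->|]; last by [].
  rewrite /s' /cand size_hist hk.
  by case: (edge_rel A _ _).
have hrho : forall k, (k <= l)%N -> outcome sg' c0 k = rho k.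
  by move=> k hk; rewrite -hout /outcome hpre.
have h1 : hist sg' c0 l.+1 = rcons (hist sg' c0 l) c.
  rewrite histS outcomeS hpre //; congr rcons; apply/ffunP => j.
  rewrite ffunE /sg' /update; case: eqP => [->|/eqP hj].
    rewrite /s' /cand size_hist ltnn eqxx.
    have -> : last c0 (hist sg c0 l) = rho l by rewrite -hout.
    by rewrite /edge_rel; case: (edge A (rho l i) (c i)) (htr i).
  by rewrite (hoth j hj) -hout outcomeS ffunE.
have h2 : forall j h, sg' j c0 (hist sg' c0 l ++ c :: h) = update Q i s j c h.
  move=> j h; rewrite hpre // /sg' /update.
  case: eqP => [hji|hj]; last by []. 
  subst j.
  have hsz : size (H ++ c :: h) = (l + size h).+1 by rewrite size_cat size_hist addnS.
  have hlt : ((l + size h).+1 < l)%N = false.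
    by apply/negbTE; rewrite -leqNgt; apply: leqW; apply: leq_addr.
  have heq : ((l + size h).+1 == l) = false by apply: gtn_eqF; rewrite ltnS leq_addr.
  have hnth : nth c0 (H ++ c :: h) l = c by rewrite nth_cat size_hist ltnn subnn.
  have hdrop : drop l.+1 (H ++ c :: h) = h.
    by rewrite -cat_rcons (drop_size_cat _ (_ : size (rcons H c) = l.+1)) // size_rcons size_hist.
  by rewrite /s' /cand hsz hlt heq hnth hdrop last_cat /= (hs c h).
have hp' : is_path A (outcome sg' c0) := outcome_path (valid_update hv hs').
have hsuf := outcome_split h1 h2.
have hc : outcome sg' c0 l.+1 = c by rewrite /outcome h1 last_rcons.
have hdec := cost_dev i hp' hrho hc.
have hrhoE : outcome sg c0 = rho := funext hout.
have hp : is_path A rho by rewrite -hrhoE; exact: outcome_path.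
have := hne i s' hs'; rewrite /profile_cost -/c0 -/sg' hrhoE hdec hsuf (pc_split i l hp).
move=> hle.
have hle2 : (((\sum_(j < l) sc rho i j)%:R)%:E + path_cost R A i (path_suffix rho l) <=
   ((\sum_(j < l) sc rho i j)%:R)%:E + (game_val R A i c + ((step_cost A (rho l) c i)%:R)%:E))%E.
  apply: (le_trans hle); rewrite -addeA; apply: leeD2l; rewrite addeC; apply: leeD2r.
  exact: hcost.
by rewrite leeD2lE in hle2.
Qed.


Fixpoint fd (rho : nat -> T) (h : seq T) (k : nat) : nat :=
  if h is x :: h' then (if x == rho k.+1 then (fd rho h' k.+1).+1 else 0%N) else 0%N.

Definition pre (rho : nat -> T) a m : seq T := [seq rho k.+1 | k <- iota a m].

Lemma fd_pre rho a m t : fd rho (pre rho a m ++ t) a = (m + fd rho t (a + m))%N.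
Proof.
elim: m a => [|m IH] a; first by rewrite /= addn0.
have -> : pre rho a m.+1 = rho a.+1 :: pre rho a.+1 m by [].
by rewrite cat_cons /= eqxx IH addSnnS.
Qed.

Lemma size_pre rho a m : size (pre rho a m) = m.
Proof. by rewrite size_map size_iota. Qed.

Lemma pre_S rho k : pre rho 0 k.+1 = rcons (pre rho 0 k) (rho k.+1).
Proof. by rewrite /pre -addn1 iotaD map_cat cats1 add0n addn1. Qed.

Lemma last_pre rho k : last (rho 0%N) (pre rho 0 k) = rho k.
Proof. by elim: k => // k IH; rewrite pre_S last_rcons. Qed.

Definition devr (x y : T) : option 'I_n :=
  [pick i | [forall j, (j != i) ==> (x j == y j)]].

Lemma devr_eq i (x y : T) : x i != y i -> (forall j, j != i -> x j = y j) ->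
  devr x y = Some i.
Proof.
move=> hi ho; rewrite /devr; case: pickP => [i' /forallP hi'|hn].
  have [->//|ne] := eqVneq i' i.
  by move: (hi' i); rewrite eq_sym ne /= (negbTE hi).
suff : [forall j, (j != i) ==> (x j == y j)] by rewrite hn.
by apply/forallP => j; apply/implyP => hj; rewrite ho.
Qed.

Definition Pch i (c : T) : profile V n := proj1_sig (cid (punish i c)).

Lemma Pch_spec i c : valid_profile A (Pch i c) /\
  forall s, valid_strat A i s -> (game_val R A i c <= profile_cost R A (update (Pch i c) i s) c i)%E.
Proof. exact: (proj2_sig (cid (punish i c))). Qed.

Definition cand (rho : nat -> T) (j : 'I_n) (c0 : T) (h : seq T) : V :=
  let m := fd rho h 0 in
  if m == size h then rho (size h).+1 j else
  let x := nth c0 h m in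
  match devr x (rho m.+1) with
  | Some i => Pch i x j x (drop m.+1 h)
  | None => rho 0%N j
  end.

Definition sgc (rho : nat -> T) : profile V n := fun j c0 h =>
  if edge_rel A (last c0 h j) (cand rho j c0 h) then cand rho j c0 h else walk j c0 h.

Lemma sgc_valid rho : valid_profile A (sgc rho).
Proof.
move=> j c0 h; rewrite /sgc.
case E: (edge_rel A (last c0 h j) (cand rho j c0 h)); [exact: E | exact: walk_valid].
Qed.

Lemma sgc_pick rho j (c0 : T) (h : seq T) : edge_rel A (last c0 h j) (cand rho j c0 h) ->
  sgc rho j c0 h = cand rho j c0 h.
Proof. by rewrite /sgc => ->. Qed.

Lemma sgc_on rho (hp : is_path A rho) j k :
  sgc rho j (rho 0%N) (pre rho 0 k) = rho k.+1 j.
Proof.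
have hc : cand rho j (rho 0%N) (pre rho 0 k) = rho k.+1 j.
  rewrite /cand; have := fd_pre rho 0 k [::]; rewrite cats0 /= addn0 => ->.
  by rewrite size_pre eqxx.
rewrite sgc_pick hc // last_pre /edge_rel.
by case: (edge A (rho k j) (rho k.+1 j)) (hp k j).
Qed.

Lemma hist_on rho (hp : is_path A rho) (hsrc : rho 0%N = csrc A n) k :
  hist (sgc rho) (csrc A n) k = pre rho 0 k.
Proof.
elim: k => // k IH; rewrite histS outcomeS IH pre_S; congr rcons.
by apply/ffunP => j; rewrite ffunE -hsrc sgc_on.
Qed.

Lemma dir2 (rho : nat -> T) (hsrc : rho 0%N = csrc A n) (hp : is_path A rho) :
  (forall (i : 'I_n) (l : nat) (c : T), dev A i (rho l) (rho l.+1) c ->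
     (path_cost R A i (path_suffix rho l) <=
        game_val R A i c + ((step_cost A (rho l) c i)%:R)%:E)%E) ->
  exists sg : profile V n, is_NE R A sg /\ forall k, outcome sg (csrc A n) k = rho k.
Proof.
move=> hcond.
have hout : forall k, outcome (sgc rho) (csrc A n) k = rho k.
  by move=> k; rewrite /outcome hist_on // -hsrc last_pre.
exists (sgc rho); split => //; split; first exact: sgc_valid.
move=> i s hs.
set c0 := csrc A n.
set sg' := update (sgc rho) i s.
have hv' : valid_profile A sg' by apply: valid_update => //; exact: sgc_valid.
have hp' := outcome_path (c0:=c0) hv'.
have hoE : outcome (sgc rho) c0 = rho := funext hout.
rewrite /profile_cost hoE.
case: (pselect (exists k, outcome sg' c0 k != rho k)) => [hex|hno]; last first.
  have -> : outcome sg' c0 = rho.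
    apply: funext => k; apply/eqP; apply/negPn/negP => hk; apply: hno; by exists k.
  exact: le_refl.
case: (ex_minnP hex) => k0 hk0 hmin.
case: k0 hk0 hmin => [|l] hk0 hmin.
  by rewrite /outcome /= hsrc eqxx in hk0.
have heq : forall m, (m <= l)%N -> outcome sg' c0 m = rho m.
  move=> m hm; apply/eqP; apply/negPn/negP => hne.
  by have := hmin m hne; rewrite ltnNge hm.
have hhist : hist sg' c0 l = pre rho 0 l.
  rewrite hist_map /pre; apply/eq_in_map => m; rewrite mem_iota add0n => /andP [_ hm].
  exact: heq.
set c := outcome sg' c0 l.+1.
have hoth : forall j, j != i -> c j = rho l.+1 j.
  move=> j hj; rewrite /c outcomeS ffunE /sg' /update.
  case: eqP => [hji|_]; first by rewrite hji eqxx in hj.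
  by rewrite hhist /c0 -hsrc sgc_on.
have hci : c i != rho l.+1 i.
  apply: contra hk0 => /eqP hci; apply/eqP/ffunP => j.
  have [->//|hj] := eqVneq j i; exact: hoth.
have hdev : dev A i (rho l) (rho l.+1) c.
  split; last exact: hoth.
  by move=> j; have := hp' l j; rewrite heq.
have [hPv hPs] := Pch_spec i c.
pose s2 : strat V n := fun c0' h' => s c0 (pre rho 0 l ++ c0' :: h').
have hs2 : valid_strat A i s2.
  by move=> c0' h'; have := hs c0 (pre rho 0 l ++ c0' :: h'); rewrite last_cat.
have h1 : hist sg' c0 l.+1 = rcons (hist sg' c0 l) c by rewrite histS.
have h2 : forall j h, sg' j c0 (hist sg' c0 l ++ c :: h) = update (Pch i c) i s2 j c h.
  move=> j h; rewrite hhist /sg' /update.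
  case: eqP => [hji|hj]; first by subst j.
  have hfd : fd rho (pre rho 0 l ++ c :: h) 0 = l.
    by rewrite fd_pre /= (negbTE hk0) addn0.
  have hsz : size (pre rho 0 l ++ c :: h) = (l + size h).+1 by rewrite size_cat size_pre addnS.
  have heqs : (l == (l + size h).+1) = false by apply: ltn_eqF; rewrite ltnS leq_addr.
  have hnth : nth c0 (pre rho 0 l ++ c :: h) l = c by rewrite nth_cat size_pre ltnn subnn.
  have hdrop : drop l.+1 (pre rho 0 l ++ c :: h) = h.
    by rewrite -cat_rcons (drop_size_cat _ (_ : size (rcons (pre rho 0 l) c) = l.+1)) // size_rcons size_pre.
  have hdv : devr c (rho l.+1) = Some i by apply: devr_eq.
  have hcd : cand rho j c0 (pre rho 0 l ++ c :: h) = Pch i c j c h.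
    by rewrite /cand hfd hsz heqs hnth hdv hdrop.
  rewrite sgc_pick hcd //= last_cat /=; exact: hPv.
have hsuf := outcome_split h1 h2.
have hdec := cost_dev i hp' heq (erefl c).
rewrite (pc_split i l hp) hdec hsuf -addeA; apply: leeD2l.
apply: le_trans (hcond i l c hdev) _; rewrite addeC; apply: leeD2r.
exact: hPs s2 hs2.
Qed.

End Game.

Theorem mainTheorem5 (R : realType) (V : finType) (A : arena V) (n : nat)
    (hA : arena_wf A) (rho : nat -> config V n)
    (hsrc : rho 0%N = csrc A n) (hpath : is_path A rho) :
  (exists sg : profile V n, is_NE R A sg /\ forall k, outcome sg (csrc A n) k = rho k)
  <->
  (forall (i : 'I_n) (l : nat) (c : config V n),
     dev A i (rho l) (rho l.+1) c ->
     (path_cost R A i (path_suffix rho l) <= game_val R A i c + ((step_cost A (rho l) c i)%:R)%:E)%E).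
Proof.
split; first by move=> [sg [hNE hout]]; exact: (dir1 hA hNE hout).
exact: dir2.
Qed.
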